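(* Let $(X,d)$ be a bounded metric space, $\lambda\ge0$, and $\ell:X\to[0,+\infty)$ lower semicontinuous with $\inf_X\ell=0$. Then the function $v(x):=\ell(x)\,\mathrm{diam}(X)$ is a supersolution of $(\mathcal{G}_\lambda)$. Moreover, $T_\lambda^\infty v$ is the Perron solution of $(\mathcal{G}_\lambda)$.
   Context: $\mathrm{diam}(X)=\sup\{d(x,y):x,y\in X\}$. Global slope: $G[u](x)=\sup_{y\neq x}\frac{(u(x)-u(y))_+}{d(x,y)}$ if $u(x)<+\infty$, $G[u](x)=+\infty$ otherwise. For $(\mathcal{G}_\lambda)$: a supersolution is a lower semicontinuous $v:X\to\mathbb{R}\cup\{+\infty\}$ with $\inf_Xv=0$ and $\lambda v+G[v]\ge\ell$ on $X$; a solution is a lower semicontinuous $u$ with $\inf_Xu=0$ and $\lambda u+G[u]=\ell$ on $X$; the Perron solution is a solution that is pointwise $\ge$ every solution. $T_\lambda u(x)=\inf_{y\in X}\frac{u(y)+\ell(x)d(x,y)}{1+\lambda d(x,y)}$ for $u:X\to[0,+\infty]$, and $T_\lambda^\infty u=\lim_nT_\lambda^nu$ pointwise. *)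

(* Defs.v *)
From mathcomp Require Import all_boot all_order all_algebra.
From mathcomp Require Import all_classical all_reals all_analysis.
Set Implicit Arguments. Unset Strict Implicit. Unset Printing Implicit Defensive.
Import Order.TTheory GRing.Theory Num.Theory.
Local Open Scope classical_set_scope.
Local Open Scope ring_scope.
Local Open Scope ereal_scope.

Section Defs.
Context {R : realType} {X : Type}.

Definition is_metric (d : X -> X -> R) : Prop :=
  [/\ (forall x y, (0 <= d x y)%R),
      (forall x y, d x y = 0%R <-> x = y),
      (forall x y, d x y = d y x) &
      (forall x y z, (d x z <= d x y + d y z)%R)].

Definition metric_bounded (d : X -> X -> R) : Prop :=
  exists M : R, forall x y, (d x y <= M)%R.

Definition diam (d : X -> X -> R) : \bar R :=
  ereal_sup [set (d p.1 p.2)%:E | p in [set: X * X]].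

Definition lsc (d : X -> X -> R) (u : X -> \bar R) : Prop :=
  forall x (a : \bar R), a < u x ->
    exists2 delta : R, (0 < delta)%R &
      forall y, (d x y < delta)%R -> a < u y.

(* The value 0 is added to the set (harmless since all
   terms are >= 0; it only fixes the value 0 when X is a singleton). *)
Definition gslope (d : X -> X -> R) (u : X -> \bar R) (x : X) : \bar R :=
  if u x < +oo then
    ereal_sup ([set 0] `|`
      [set maxe (u x - u y) 0 * ((d x y)^-1)%:E | y in [set y | y <> x]])
  else +oo.

Definition supersolution (d : X -> X -> R) (lam : R) (ell : X -> R)
    (v : X -> \bar R) : Prop :=
  [/\ (forall x, v x != -oo), lsc d v,
      ereal_inf (range v) = 0 &
      forall x, (ell x)%:E <= lam%:E * v x + gslope d v x].

Definition solution (d : X -> X -> R) (lam : R) (ell : X -> R)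
    (u : X -> \bar R) : Prop :=
  [/\ (forall x, u x != -oo), lsc d u,
      ereal_inf (range u) = 0 &
      forall x, lam%:E * u x + gslope d u x = (ell x)%:E].

Definition perron_solution (d : X -> X -> R) (lam : R) (ell : X -> R)
    (u : X -> \bar R) : Prop :=
  solution d lam ell u /\
  forall w, solution d lam ell w -> forall x, w x <= u x.

Definition Tlam (d : X -> X -> R) (lam : R) (ell : X -> R)
    (u : X -> \bar R) (x : X) : \bar R :=
  ereal_inf [set (u y + (ell x * d x y)%:E) * ((1 + lam * d x y)^-1)%:E
            | y in [set: X]].

End Defs.

(* Main.v *)
Set Warnings "-all".
Require Import Defs.
From mathcomp Require Import all_boot all_order all_algebra.
From mathcomp Require Import all_classical all_reals all_analysis.
From mathcomp Require Import lra.
Import Order.TTheory GRing.Theory Num.Theory.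
Local Open Scope classical_set_scope.
Local Open Scope ring_scope.
Local Open Scope ereal_scope.
Section Perron.
Local Open Scope ring_scope.
Context {R : realType} {X : Type} (d : X -> X -> R) (lam : R) (ell : X -> R).
Context (Hm : is_metric d) (Hb : metric_bounded d) (Hlam : 0 <= lam)
  (Hell : forall x, 0 <= ell x) (Hlsc : lsc d (fun x => (ell x)%:E))
  (Hinf : ereal_inf (range (fun x => (ell x)%:E)) = 0%E).

Lemma d_ge0 x y : 0 <= d x y. Proof. by case: Hm. Qed.
Lemma dxx x : d x x = 0. Proof. by case: Hm => _ h _ _; apply (proj2 (h x x)). Qed.
Lemma d_eq0 x y : d x y = 0 -> x = y. Proof. by case: Hm => _ h _ _; apply (proj1 (h x y)). Qed.
Lemma d_sym x y : d x y = d y x. Proof. by case: Hm. Qed.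
Lemma d_tri x y z : d x z <= d x y + d y z. Proof. by case: Hm. Qed.
Lemma d_gt0 x y : y <> x -> 0 < d x y.
Proof. by move=> yx; rewrite lt_neqAle d_ge0 andbT; apply/eqP => /esym /d_eq0 /esym. Qed.

Definition D := sup [set d p.1 p.2 | p in [set: X * X]].
Lemma D_hub : has_ubound [set d p.1 p.2 | p in [set: X * X]].
Proof. by case: Hb => M hM; exists M => _ [p _ <-]. Qed.
Lemma D_ub x y : d x y <= D.
Proof. by apply: ub_le_sup; [exact: D_hub | exists (x, y)]. Qed.
Lemma D_ge0 (x : X) : 0 <= D.
Proof. exact: le_trans (d_ge0 x x) (D_ub x x). Qed.
Lemma diamE (x : X) : diam d = D%:E.
Proof.
rewrite /diam /D -ereal_sup_EFin; first by rewrite image_comp.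
- exact: D_hub.
- by exists (d x x); exists (x, x).
Qed.

Lemma ell_small {e : R} : 0 < e -> exists x, ell x < e.
Proof.
move=> e0; have : (ereal_inf (range (fun x => (ell x)%:E)) < e%:E)%E by rewrite Hinf lte_fin.
by move=> /ereal_inf_lt [_ [x _ <-]]; rewrite lte_fin => h; exists x.
Qed.

Lemma Dzero : D = 0 -> forall x, ell x = 0.
Proof.
move=> D0 x; apply/eqP; rewrite eq_le Hell andbT; rewrite leNgt; apply/negP => hx.
have [y hy] := ell_small hx.
have : d x y = 0 by apply/eqP; rewrite eq_le d_ge0 andbT -D0 D_ub.
by move/d_eq0 => xy; move: hy; rewrite xy ltxx.
Qed.

Lemma ell_lsc x a : a < ell x -> exists2 del, 0 < del & forall y, d x y < del -> a < ell y.
Proof.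
move=> ax; have [|del dp h] := Hlsc x a%:E; first by rewrite lte_fin.
by exists del => // y /h; rewrite lte_fin.
Qed.

Lemma den_gt0 x y : 0 < 1 + lam * d x y.
Proof. have := mulr_ge0 Hlam (d_ge0 x y); lra. Qed.

Definition Fr (u : X -> R) x y := (u y + ell x * d x y) / (1 + lam * d x y).
Definition Tr (u : X -> R) x := inf [set Fr u x y | y in [set: X]].

Lemma Fr_ge0 u x y : (forall z, 0 <= u z) -> 0 <= Fr u x y.
Proof.
move=> u0; rewrite /Fr divr_ge0 //; last exact/ltW/den_gt0.
by rewrite addr_ge0 // mulr_ge0 // ?d_ge0.
Qed.

Lemma Tr_lb u x y : (forall z, 0 <= u z) -> Tr u x <= Fr u x y.
Proof.
move=> u0; apply: ge_inf; last by exists y.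
by exists 0 => _ [z _ <-]; exact: Fr_ge0.
Qed.

Lemma Tr_glb u x c : (forall y, c <= Fr u x y) -> c <= Tr u x.
Proof.
move=> h; apply: lb_le_inf; first by exists (Fr u x x), x.
by move=> _ [z _ <-]; exact: h.
Qed.

Lemma Tr_ge0 u x : (forall z, 0 <= u z) -> 0 <= Tr u x.
Proof. by move=> u0; apply: Tr_glb => y; exact: Fr_ge0. Qed.

Lemma Fr_self u x : Fr u x x = u x.
Proof. by rewrite /Fr dxx !mulr0 !addr0 invr1 mulr1. Qed.

Lemma Tr_le_self u x : (forall z, 0 <= u z) -> Tr u x <= u x.
Proof. by move=> u0; rewrite -[leRHS](Fr_self u x); exact: Tr_lb. Qed.

Lemma TlamE u : (forall z, 0 <= u z) ->
  Tlam d lam ell (fun x => (u x)%:E) = (fun x => (Tr u x)%:E).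
Proof.
move=> u0; apply: funext => x; rewrite /Tlam /Tr -ereal_inf_EFin.
- by rewrite image_comp.
- by exists 0 => _ [z _ <-]; exact: Fr_ge0.
- by exists (Fr u x x), x.
Qed.

Definition vr x := ell x * D.
Definition un n := iter n Tr vr.

Lemma un_ge0 n x : 0 <= un n x.
Proof.
elim: n x => [|n IH] x /=; first by rewrite /vr mulr_ge0 // (D_ge0 x).
exact: Tr_ge0.
Qed.

Lemma iterE n : iter n (Tlam d lam ell) (fun x => (ell x)%:E * diam d)%E
  = (fun x => (un n x)%:E).
Proof.
elim: n => [|n IH] /=.
  by apply: funext => x; rewrite (diamE x) -EFinM.
by rewrite IH TlamE //; exact: un_ge0.
Qed.

Lemma un_dec n x : un n.+1 x <= un n x.
Proof. by apply: Tr_le_self => z; exact: un_ge0. Qed.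

Lemma un_mono x : {homo (fun n => un n x) : n m / (n <= m)%N >-> m <= n}.
Proof.
move=> n m nm /=; rewrite -(subnKC nm); elim: (m - n)%N => [|k IH].
  by rewrite addn0.
by rewrite addnS; exact: le_trans (un_dec _ _) IH.
Qed.

Definition w x := inf (range (fun n => un n x)).

Lemma w_le n x : w x <= un n x.
Proof.
apply: ge_inf; last by exists n.
by exists 0 => _ [k _ <-]; exact: un_ge0.
Qed.

Lemma w_glb x c : (forall n, c <= un n x) -> c <= w x.
Proof.
move=> h; apply: lb_le_inf; first by exists (un 0 x), 0%N.
by move=> _ [k _ <-]; exact: h.
Qed.

Lemma w_ge0 x : 0 <= w x.
Proof. by apply: w_glb => n; exact: un_ge0. Qed.

Lemma w_lt x c : w x < c -> exists n, un n x < c.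
Proof.
move=> /inf_lt [].
  by exists (un 0 x), 0%N.
by move=> _ [k _ <-] h; exists k.
Qed.

Lemma cvg_w x : (fun n => iter n (Tlam d lam ell) (fun x => (ell x)%:E * diam d)%E x)
  @ \oo --> (w x)%:E.
Proof.
have -> : (fun n => iter n (Tlam d lam ell) (fun x => (ell x)%:E * diam d)%E x)
  = (fun n => (un n x)%:E) by apply: funext => n; rewrite iterE.
have -> : (w x)%:E = ereal_inf (range (fun n => (un n x)%:E)).
  rewrite /w -ereal_inf_EFin ?image_comp //.
  - by exists 0 => _ [k _ <-]; exact: un_ge0.
  - by exists (un 0 x), 0%N.
apply: ereal_nonincreasing_cvgn => n m nm; rewrite lee_fin; exact: un_mono.
Qed.

Lemma sub_w x y : w x * (1 + lam * d x y) <= w y + ell x * d x y.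
Proof.
rewrite leNgt; apply/negP => H.
have : w y < w x * (1 + lam * d x y) - ell x * d x y by lra.
move=> /w_lt [n hn].
have h1 : un n.+1 x <= Fr (un n) x y by apply: Tr_lb => z; exact: un_ge0.
have h2 : Fr (un n) x y < w x.
  by rewrite /Fr ltr_pdivrMr ?den_gt0 //; lra.
have := w_le n.+1 x; lra.
Qed.

Lemma max_w (u : X -> R) : (forall x, u x <= vr x) ->
  (forall x y, u x * (1 + lam * d x y) <= u y + ell x * d x y) ->
  forall x, u x <= w x.
Proof.
move=> hv hs x; apply: w_glb => n; elim: n x => [|n IH] x; first exact: hv.
change (u x <= Tr (un n) x); apply: Tr_glb => y; rewrite /Fr ler_pdivlMr ?den_gt0 //.
have := hs x y; have := IH y; lra.
Qed.

Lemma w_le_v x : w x <= vr x. Proof. exact: (w_le 0). Qed.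

Lemma vr_small {e : R} : 0 < e -> exists x, vr x < e.
Proof.
move=> e0; have [x _] := ell_small e0.
have Dp : 0 < D + 1 by have := D_ge0 x; lra.
have [y hy] := ell_small (divr_gt0 e0 Dp); exists y.
move: hy; rewrite ltr_pdivlMr // /vr => hy.
have hy' : ell y * (D + 1) < e := hy.
have := Hell y; lra.
Qed.

Lemma w_small {e : R} : 0 < e -> exists x, w x < e.
Proof. by move=> /vr_small [x hx]; exists x; exact: le_lt_trans (w_le_v x) hx. Qed.

Lemma lamw x : lam * w x <= ell x.
Proof.
suff H : forall e : R, 0 < e -> lam * w x <= ell x + e.
  by apply/ler_addgt0Pr => e e0; exact: H.
move=> e e0.
have lp : 0 < lam + 1 by have := Hlam; lra.
have [y hy] := w_small (divr_gt0 e0 lp).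
move: hy; rewrite ltr_pdivlMr // => hy.
have hs := sub_w x y.
have hk := den_gt0 x y.
have hd := d_ge0 x y.
have h1 : lam * (w x * (1 + lam * d x y)) <= lam * (w y + ell x * d x y).
  exact: ler_wpM2l.
have hy' : w y * (lam + 1) < e := hy.
have h2 : lam * w y <= e by have := w_ge0 y; lra.
have h3 : 0 <= e * (lam * d x y) by apply: mulr_ge0; [exact: ltW | exact: mulr_ge0 Hlam (d_ge0 x y)].
have h4 : (lam * w x) * (1 + lam * d x y) <= (ell x + e) * (1 + lam * d x y).
  have := Hell x; have := Hlam; lra.
by move: h4; rewrite ler_pM2r.
Qed.

Lemma lsc_w x e : 0 < e -> exists2 del, 0 < del & forall y, d x y < del -> w x - e < w y.
Proof.
move=> e0; have lp : 0 < ell x + 1 by have := Hell x; lra.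
exists (e / (ell x + 1)); first exact: divr_gt0.
move=> y; rewrite ltr_pdivlMr // => hy.
have hs := sub_w x y.
have : 0 <= w x * (lam * d x y) by rewrite mulr_ge0 ?w_ge0 // mulr_ge0 // d_ge0.
have := d_ge0 x y; lra.
Qed.

Lemma super_v x g : 0 <= g ->
  (forall y, y <> x -> Num.max (vr x - vr y) 0 / d x y <= g) -> ell x <= lam * vr x + g.
Proof.
move=> g0 hg; rewrite leNgt; apply/negP => H.
have DD := D_ge0 x.
have lv : 0 <= lam * vr x by apply: mulr_ge0 => //; rewrite /vr mulr_ge0.
have pos : 0 < ell x - g by lra.
have [y hy] := ell_small pos.
have yx : y <> x by move=> yx; rewrite yx in hy; lra.
have dp := d_gt0 x y yx.
have := hg y yx; rewrite ler_pdivrMr // => h.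
have h1 : vr x - vr y <= g * d x y by apply: le_trans h; rewrite le_max lexx.
have h2 : g * d x y <= g * D := ler_wpM2l g0 (D_ub x y).
have h3 : 0 < (ell x - ell y - g) * D.
  by apply: mulr_gt0; [lra | exact: lt_le_trans dp (D_ub x y)].
rewrite /vr in h1; lra.
Qed.

Lemma super_w x g : 0 <= g ->
  (forall y, y <> x -> Num.max (w x - w y) 0 / d x y <= g) -> ell x <= lam * w x + g.
Proof.
move=> g0 hg.
have star : forall y, w x - w y <= g * d x y.
  move=> y; have [->|yx] := pselect (y = x); first by rewrite dxx mulr0 subrr.
  have dp := d_gt0 x y yx.
  have := hg y yx; rewrite ler_pdivrMr // => h.
  by apply: le_trans h; rewrite le_max lexx.
rewrite leNgt; apply/negP => H.
have lw : 0 <= lam * w x := mulr_ge0 Hlam (w_ge0 x).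
have [K0 K0def] : exists K0, K0 = ell x - lam * w x - g by eexists.
have K0p : 0 < K0 by rewrite K0def; lra.
have DD := D_ge0 x.
have [D0|Dp] : D = 0 \/ 0 < D.
  by move: DD; rewrite le_eqVlt => /orP [/eqP <-|]; [left|right].
  have := Dzero D0 x; lra.
have [hv|hv] := leP (vr x) (w x).
  have [y hy] := w_small (mulr_gt0 K0p Dp).
  have h1 := star y.
  have h2 : g * d x y <= g * D := ler_wpM2l g0 (D_ub x y).
  have h3 : 0 <= lam * w x * D := mulr_ge0 lw DD.
  have h4 : K0 * D = ell x * D - lam * w x * D - g * D by rewrite K0def !mulrBl.
  rewrite /vr in hv; lra.
have [ga gadef] : exists ga, ga = vr x - w x by eexists.
have gap : 0 < ga by rewrite gadef; lra.
have a1 : ell x - K0 / 2 < ell x by lra.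
have [d1 d1p hd1] := ell_lsc _ _ a1.
have gD : 0 < ga / (2 * D) by apply: divr_gt0 => //; lra.
have a2 : ell x - ga / (2 * D) < ell x by lra.
have [d2 d2p hd2] := ell_lsc _ _ a2.
have [del [delp [del1 del2]]] : exists del, 0 < del /\ del <= d1 /\ del <= d2.
  exists (Num.min d1 d2); split; first by rewrite lt_min d1p d2p.
  by split; rewrite ge_min lexx ?orbT.
have lp : 0 < 4 * (lam + 1) by have := Hlam; lra.
have [c [cp [c1 [c2 c3]]]] :
    exists c, 0 < c /\ c <= ga / 2 /\ c * (4 * (lam + 1)) <= K0 /\ c * 4 <= K0 * del.
  have q1 : 0 < ga / 2 by lra.
  have q2 : 0 < K0 / (4 * (lam + 1)) by apply: divr_gt0.
  have q3 : 0 < K0 * del / 4 by apply: divr_gt0; [exact: mulr_gt0 | lra].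
  exists (Num.min (ga / 2) (Num.min (K0 / (4 * (lam + 1))) (K0 * del / 4))).
  split; first by rewrite !lt_min q1 q2 q3.
  split; first by rewrite ge_min lexx.
  split; first by rewrite -ler_pdivlMr // !ge_min lexx ?orbT.
  by rewrite -ler_pdivlMr // !ge_min lexx ?orbT.
have lc : lam * c <= K0 / 4 by have := Hlam; lra.
have [K Kdef] : exists K, K = ell x - K0 / 2 - lam * w x - lam * c by eexists.
have Kg : g + K0 / 4 <= K by rewrite Kdef; lra.
have K0' : 0 <= K by lra.
pose b z := w x + c - K * d x z.
have claim1 : forall z, w z < b z -> d x z < del.
  move=> z; rewrite /b => hz.
  have h0 := star z.
  have dz := d_ge0 x z.
  have h : K0 / 4 * d x z <= (K - g) * d x z by apply: ler_wpM2r => //; lra.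
  have h' : K0 / 4 * d x z < K0 / 4 * del by lra.
  by move: h'; rewrite ltr_pM2l //; lra.
have claim2 : forall z, Num.max (w z) (b z) <= vr z.
  move=> z; rewrite ge_max w_le_v /=.
  have [hz|hz] := leP (b z) (w z); first exact: le_trans hz (w_le_v z).
  have dz := claim1 z hz.
  have := hd2 z (lt_le_trans dz del2) => h.
  have h1 : (ell x - ga / (2 * D)) * D < ell z * D by rewrite ltr_pM2r.
  have e1 : ga / (2 * D) * D = ga / 2.
    by rewrite invfM mulrA -mulrA mulVf ?mulr1 // gt_eqF.
  have h2 : 0 <= K * d x z := mulr_ge0 K0' (d_ge0 x z).
  rewrite /b /vr; rewrite /vr in gadef; rewrite mulrBl e1 in h1; lra.
have claim3 : forall z y, Num.max (w z) (b z) * (1 + lam * d z y)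
    <= Num.max (w y) (b y) + ell z * d z y.
  move=> z y.
  have hy1 : w y <= Num.max (w y) (b y) by rewrite le_max lexx.
  have hy2 : b y <= Num.max (w y) (b y) by rewrite le_max lexx orbT.
  have [hz|hz] := leP (b z) (w z).
    have := sub_w z y; lra.
  have dz := claim1 z hz.
  have := hd1 z (lt_le_trans dz del1) => hl.
  have s0 := d_ge0 z y.
  have tri := d_tri x z y.
  have ii : K * d x y <= K * d x z + K * d z y by rewrite -mulrDr ler_wpM2l.
  have bz : b z <= w x + c by rewrite /b; have := mulr_ge0 K0' (d_ge0 x z); lra.
  have iii : lam * d z y * b z <= lam * d z y * (w x + c).
    by apply: ler_wpM2l => //; exact: mulr_ge0.
  have iv : (ell x - K0 / 2) * d z y <= ell z * d z y by apply: ler_wpM2r => //; lra.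
  have v1 : K * d z y = (ell x - K0 / 2 - lam * w x - lam * c) * d z y by rewrite Kdef.
  move: iii bz; rewrite /b => iii bz.
  rewrite /b in hy2; lra.
have := max_w (fun z => Num.max (w z) (b z)) claim2 claim3 x.
have := le_max (b x) (w x) (b x); rewrite lexx orbT => hb.
have hb0 : b x = w x + c by rewrite /b dxx mulr0 subr0.
lra.
Qed.

Lemma gslope_elt (r : X -> R) x y :
  (maxe ((r x)%:E - (r y)%:E) 0 * ((d x y)^-1)%:E)%E = (Num.max (r x - r y) 0 / d x y)%:E.
Proof. by rewrite -EFinB -EFin_max -EFinM. Qed.

Lemma gslopeE (r : X -> R) x : gslope d (fun z => (r z)%:E) x =
  ereal_sup ([set 0%E] `|` [set (Num.max (r x - r y) 0 / d x y)%:E | y in [set y | y <> x]]).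
Proof.
rewrite /gslope ltry; congr (ereal_sup (_ `|` _)); apply: eq_imagel => y _.
exact: gslope_elt.
Qed.

Lemma G_ge0 (r : X -> R) x : (0 <= gslope d (fun z => (r z)%:E) x)%E.
Proof. by rewrite gslopeE; apply: ereal_sup_ubound; left. Qed.

Lemma G_elt (r : X -> R) x y : y <> x ->
  ((Num.max (r x - r y) 0 / d x y)%:E <= gslope d (fun z => (r z)%:E) x)%E.
Proof. by move=> yx; rewrite gslopeE; apply: ereal_sup_ubound; right; exists y. Qed.

Lemma G_ub (r : X -> R) x M : 0 <= M ->
  (forall y, y <> x -> Num.max (r x - r y) 0 / d x y <= M) ->
  (gslope d (fun z => (r z)%:E) x <= M%:E)%E.
Proof.
move=> M0 H; rewrite gslopeE; apply: ge_ereal_sup => _ [->|[y yx <-]]; rewrite lee_fin //.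
exact: H.
Qed.

Lemma G_lower (r : X -> R) x a :
  (forall g, 0 <= g -> (forall y, y <> x -> Num.max (r x - r y) 0 / d x y <= g) ->
     a <= lam * r x + g) ->
  (a%:E <= lam%:E * (r x)%:E + gslope d (fun z => (r z)%:E) x)%E.
Proof.
move=> H; have G0 := G_ge0 r x; have Gel := G_elt r x.
move: G0 Gel; case: (gslope _ _ _) => [g||] G0 Gel.
- rewrite -EFinM -EFinD lee_fin; apply: H; first by rewrite -lee_fin.
  by move=> y yx; rewrite -lee_fin; exact: Gel.
- by rewrite -EFinM addey // leey.
- by [].
Qed.

Lemma lsc_EFin (r : X -> R) :
  (forall x e, 0 < e -> exists2 del, 0 < del & forall y, d x y < del -> r x - e < r y) ->
  lsc d (fun x => (r x)%:E).
Proof.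
move=> H x [a||] /=.
- rewrite lte_fin => ax.
  have [|del dp hd] := H x (r x - a); first by rewrite subr_gt0.
  by exists del => // y /hd h; rewrite lte_fin; lra.
- by rewrite ltNge leey.
- by move=> _; exists 1 => // y _; exact: ltNyr.
Qed.

Lemma inf_EFin0 (r : X -> R) : (forall x, 0 <= r x) ->
  (forall e, 0 < e -> exists x, r x < e) ->
  ereal_inf (range (fun x => (r x)%:E)) = 0%E.
Proof.
move=> r0 hs.
have lb : (0 <= ereal_inf (range (fun x => (r x)%:E)))%E.
  by apply: le_ereal_inf_tmp => _ [x _ <-]; rewrite lee_fin.
have lbd : forall x, (ereal_inf (range (fun x => (r x)%:E)) <= (r x)%:E)%E.
  by move=> x; apply: ereal_inf_lbound; exists x.
have [x1 _] := hs 1 ltr01.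
move: lb lbd; case: (ereal_inf _) => [i||] // lb lbd; last by have := lbd x1.
rewrite lee_fin in lb; move: lb; rewrite le_eqVlt => /orP [/eqP <-//|ip].
have [x hx] := hs i ip; have := lbd x; rewrite lee_fin => h.
by move: hx; rewrite ltNge h.
Qed.

Lemma inf_small (r : X -> R) : ereal_inf (range (fun x => (r x)%:E)) = 0%E ->
  forall e, 0 < e -> exists y, r y < e.
Proof.
move=> H e e0; have : (ereal_inf (range (fun x => (r x)%:E)) < e%:E)%E by rewrite H lte_fin.
by move=> /ereal_inf_lt [_ [x _ <-]]; rewrite lte_fin => h; exists x.
Qed.

Lemma inf_ge0 (r : X -> R) : ereal_inf (range (fun x => (r x)%:E)) = 0%E ->
  forall x, 0 <= r x.
Proof.
move=> H x; have : (ereal_inf (range (fun x => (r x)%:E)) <= (r x)%:E)%E.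
  by apply: ereal_inf_lbound; exists x.
by rewrite H => h; exact: h.
Qed.

Lemma sol_sub (r : X -> R) :
  (forall x, (lam%:E * (r x)%:E + gslope d (fun z => (r z)%:E) x)%E = (ell x)%:E) ->
  forall x y, r x * (1 + lam * d x y) <= r y + ell x * d x y.
Proof.
move=> H x y; have [->|yx] := pselect (y = x).
  by rewrite dxx !mulr0 addr0 mulr1 addr0.
have := H x; have := G_elt r x y yx; have := G_ge0 r x.
case: (gslope _ _ _) => [g||] G0 Ge.
- rewrite -EFinM -EFinD => /eqP; rewrite eqe => /eqP hg.
  rewrite lee_fin in Ge; have dp := d_gt0 x y yx.
  move: Ge; rewrite ler_pdivrMr // => Ge.
  have h1 : r x - r y <= Num.max (r x - r y) 0 by rewrite le_max lexx.
  have hg' : g = ell x - lam * r x by lra.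
  rewrite hg' in Ge; lra.
- by rewrite -EFinM addey.
- by [].
Qed.

Lemma r_le_v (r : X -> R) :
  (forall x y, r x * (1 + lam * d x y) <= r y + ell x * d x y) ->
  (forall e, 0 < e -> exists y, r y < e) -> (forall x, 0 <= r x) ->
  forall x, r x <= vr x.
Proof.
move=> hs hsm r0 x.
suff H : forall e : R, 0 < e -> r x <= vr x + e.
  by apply/ler_addgt0Pr => e e0; exact: H.
move=> e e0; have [y hy] := hsm e e0.
have h1 := hs x y.
have h2 : 0 <= r x * (lam * d x y) by apply: mulr_ge0 (r0 x) (mulr_ge0 Hlam (d_ge0 x y)).
have h3 : ell x * d x y <= ell x * D := ler_wpM2l (Hell x) (D_ub x y).
rewrite /vr; lra.
Qed.

Lemma sol_real (u : X -> \bar R) : solution d lam ell u ->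
  exists r : X -> R, u = (fun x => (r x)%:E).
Proof.
case=> un lscu infu equ.
have uoo : forall x, u x != +oo%E.
  move=> x; apply/negP => /eqP ux; have := equ x.
  rewrite /gslope ux ltxx /=.
  have H0 : (0 <= lam%:E * +oo)%E by apply: mule_ge0; rewrite ?lee_fin ?le0y.
  rewrite addey //; apply/negP => /eqP h; by rewrite h in H0.
exists (fun x => fine (u x)); apply: funext => x; rewrite fineK //.
by rewrite fin_numE un uoo.
Qed.

Lemma main_sec : let v := fun x => ((ell x)%:E * diam d)%E in
  supersolution d lam ell v /\
  exists w0 : X -> \bar R,
    (forall x, (fun n => iter n (Tlam d lam ell) v x) @ \oo --> w0 x) /\
    perron_solution d lam ell w0.
Proof.
move=> v.
have [x0 _] : exists x : X, True.
  apply: contrapT => nx.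
  have E : range (fun x => (ell x)%:E) = set0.
    by apply/seteqP; split => // z [x _ _]; exfalso; apply: nx; exists x.
  by have := Hinf; rewrite E ereal_inf0.
have vE : v = (fun x => (vr x)%:E).
  by apply: funext => x; rewrite /v (diamE x0) -EFinM.
split.
  rewrite vE; split.
  - by [].
  - apply: lsc_EFin => x e e0.
    have DD := D_ge0 x.
    have Dp : 0 < D + 1 by lra.
    have tp : 0 < e / (D + 1) by exact: divr_gt0.
    have a1 : ell x - e / (D + 1) < ell x by lra.
    have [del dp hd] := ell_lsc _ _ a1.
    exists del => // y /hd h.
    have h1 : (ell x - e / (D + 1)) * D <= ell y * D by apply: ler_wpM2r => //; exact: ltW.
    have h2 : e / (D + 1) * (D + 1) = e by rewrite divfK // gt_eqF.
    rewrite /vr; lra.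
  - apply: inf_EFin0 => [x|e e0]; first by rewrite /vr mulr_ge0 // (D_ge0 x).
    exact: vr_small e0.
  - move=> x; apply: G_lower => g g0 hg; exact: super_v.
exists (fun x => (w x)%:E); split.
  move=> x; exact: cvg_w.
split.
  split.
  - by [].
  - by apply: lsc_EFin => x e e0; exact: lsc_w.
  - apply: inf_EFin0; first exact: w_ge0.
    by move=> e e0; exact: w_small e0.
  - move=> x; apply/le_anti/andP; split; last first.
      by apply: G_lower => g g0 hg; exact: super_w.
    have M0 : 0 <= ell x - lam * w x by rewrite subr_ge0 lamw.
    have hub : (gslope d (fun z => (w z)%:E) x <= (ell x - lam * w x)%:E)%E.
      apply: G_ub => // y yx.
      have dp := d_gt0 x y yx.
      rewrite ler_pdivrMr // ge_max; apply/andP; split.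
        have := sub_w x y; lra.
      exact: mulr_ge0 M0 (ltW dp).
    rewrite -EFinM; apply: le_trans (leeD2l _ hub) _.
    rewrite -EFinD lee_fin; lra.
move=> u hu x.
have [r ur] := sol_real u hu; subst u.
case: hu => _ _ infu equ.
rewrite lee_fin; apply: max_w; last exact: sol_sub equ.
apply: r_le_v; [exact: sol_sub equ | exact: inf_small infu | exact: inf_ge0 infu].
Qed.

End Perron.

Theorem proposition5p2 (R : realType) (X : Type) (d : X -> X -> R)
  (lam : R) (ell : X -> R) :
  is_metric d -> metric_bounded d -> (0 <= lam)%R ->
  (forall x, (0 <= ell x)%R) -> lsc d (fun x => (ell x)%:E) ->
  ereal_inf (range (fun x => (ell x)%:E)) = 0 ->
  let v := fun x => (ell x)%:E * diam d in
  supersolution d lam ell v /\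
  exists w : X -> \bar R,
    (forall x, (fun n => iter n (Tlam d lam ell) v x) @ \oo --> w x) /\
    perron_solution d lam ell w.
Proof.
move=> Hm Hb Hlam Hell Hlsc Hinf.
exact: (main_sec d lam ell Hm Hb Hlam Hell Hlsc Hinf).
Qed.
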